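(* Let $t$ be a well-formed tree over $\tilde A_{i,k}$, $\Sigma$ a winning strategy of $P$ in $\mathcal G(t)$, $u\in\Sigma$, and $j$ a $P$-losing number. Then $$s(u,\Sigma){\upharpoonright}j=\sup_{w\in\mathrm{act}_u(\Sigma,j)}\big(s(w,\Sigma){\upharpoonright}j\big)=\sup_{w\in\mathrm{act}_u(\Sigma,j)}\big(s(\varepsilon,\Sigma{\upharpoonright}w){\upharpoonright}j\big),$$ where the empty supremum is the all-zero tuple.
   Context: Fix natural numbers $i<k$. Trees over a ranked alphabet are partial maps $t:\omega^*\to A$ with non-empty prefix-closed domain where a node with an $m$-ary label has exactly the children $u0,\ldots,u(m-1)$; $t{\upharpoonright}u$ is the subtree at $u$, $\preceq$ the prefix order. The alphabet $\tilde A_{i,k}$ has unary letters $p_i,\ldots,p_k$, a unary letter $\sim$, and binary letters $c_1,c_2$. Players $1,2$; $\bar P$ the opponent. Well-formed: no branch has infinitely many $\sim$. A node $u$ is switched if an odd number of strict prefixes $w\prec u$ have $t(w)=\sim$, kept otherwise. The game $\mathcal G(t)$: positions are nodes, moves to children, start at the root; $u$ is controlled by $P$ iff ($u$ kept and $t(u)=c_P$) or ($u$ switched and $t(u)=c_{\bar P}$). An infinite play is won by player 1 iff it is (eventually) kept and the least $j$ with infinitely many nodes labelled $p_j$ is even, or (eventually) switched and this $j$ is odd (take $j=k$ if none occurs infinitely often). A strategy of $P$ is a set $\Sigma\subseteq\mathrm{dom}(t)$ containing the root, prefix-closed, where each $u\in\Sigma$ controlled by $P$ has exactly one child in $\Sigma$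 and every other $u\in\Sigma$ has all children in $\Sigma$; winning if every branch all of whose prefixes lie in $\Sigma$ is won by $P$. For $u\in\Sigma$, $\Sigma{\upharpoonright}u=\{w: uw\in\Sigma\}$; when no strict prefix of $u$ is labelled $\sim$ it is a winning strategy of $P$ in $\mathcal G(t{\upharpoonright}u)$, and $s(\cdot,\Sigma{\upharpoonright}u)$ is computed with respect to the tree $t{\upharpoonright}u$. $P$-losing numbers: $j\in\{i,\ldots,k\}$ odd for $P=1$, even for $P=2$; $i',k'$ least/largest. Tuples $(\theta_{i'},\theta_{i'+2},\ldots,\theta_{k'})$ of countable ordinals are ordered lexicographically (smaller index more significant), suprema in this order; for a $P$-losing $j$, $(\theta_{i'},\ldots,\theta_{k'}){\upharpoonright}j=(\theta_{i'},\ldots,\theta_j)$. A node $u\in\Sigma$ is active if $t(u)=p_j$ for a $P$-losing $j$ and no strict prefix $w\prec u$ has $t(w)=\sim$ or $t(w)=p_{j'}$ with $j'<j$; $\mathrm{act}(\Sigma)$ is the set of active nodes, and $\mathrm{act}_u(\Sigma,j)=\{w\in\mathrm{act}(\Sigma): u\preceq w,\ t(w)=p_{j''}\text{ with }j''\le j\}$. $u\gg w$ iff $u,w\in\Sigma$, $u\prec w$ and some $w'\in\mathrm{act}(\Sigma)$ has $u\preceq w'\preceq w$ (well-founded for winning $\Sigma$). $\mathrm{succ}_u(\Sigma)$ is the set of $\preceq$-minimal elements of $\{w\in\mathrm{act}(\Sigma):u\preceq w\}$. The map $s(\cdot,\Sigma)$ is defined by well-founded recursion along $\gg$: (a) if $u\in\mathrm{act}(\Sigma)$,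 $t(u)=p_j$ and $s(u0,\Sigma)=(\theta_{i'},\ldots,\theta_{k'})$, then $s(u,\Sigma)=(\theta_{i'},\ldots,\theta_{j-2},\theta_j+1,0,\ldots,0)$; (b) if $u\notin\mathrm{act}(\Sigma)$, then $s(u,\Sigma)=\sup_{w\in\mathrm{succ}_u(\Sigma)}s(w,\Sigma)$ (empty supremum $=(0,\ldots,0)$). *)

(* Defs.v *)
From mathcomp Require Import all_boot.
From Stdlib Require Import ClassicalEpsilon.

Set Implicit Arguments.
Unset Strict Implicit.
Unset Printing Implicit Defensive.

(* Countable ordinals: Brouwer trees.  OL f denotes sup_n (f n).       *)
Inductive Ord : Type := OZ | OS of Ord | OL of (nat -> Ord).

(* x <= y  (standard order on Brouwer trees, read as ordinals):
   0 <= y;  x'+1 <= y  iff  x' < y;  sup f <= y  iff  all f n <= y;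
   x' < 0 never; x' < y'+1 iff x' <= y'; x' < sup g iff x' < g n for some n. *)
Fixpoint ole (x y : Ord) {struct x} : Prop :=
  match x with
  | OZ => True
  | OS x' =>
      (fix lt (y : Ord) : Prop :=
         match y with
         | OZ => False
         | OS y' => ole x' y'
         | OL g => exists n, lt (g n)
         end) y
  | OL f => forall n, ole (f n) y
  end.

Definition olt (x y : Ord) : Prop := ole (OS x) y.
(* equality of ordinals (Brouwer trees are a representation up to this) *)
Definition oeq (x y : Ord) : Prop := ole x y /\ ole y x.

Inductive player := P1 | P2.
Definition opp (P : player) : player := if P is P1 then P2 else P1.

(* Lp j = p_j, Lsim = ~, Lc P = c_P *)
Inductive label := Lp of nat | Lsim | Lc of player.
Definition arity (a : label) : nat := if a is Lc _ then 2 else 1.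

Definition node := seq nat.
Definition tree := node -> option label.
Definition in_dom (t : tree) (u : node) : Prop := exists a, t u = Some a.

Definition is_tree (i k : nat) (t : tree) : Prop :=
  [/\ in_dom t [::],
      (forall u w, in_dom t (u ++ w) -> in_dom t u),
      (forall u a, t u = Some a -> forall n, in_dom t (rcons u n) <-> n < arity a)
    & (forall u j, t u = Some (Lp j) -> i <= j <= k)].

Definition prefix (u w : node) : Prop := exists v, w = u ++ v.

Definition subtree (t : tree) (u : node) : tree := fun w => t (u ++ w).
Definition subset_at (Sg : node -> Prop) (u : node) : node -> Prop :=
  fun w => Sg (u ++ w).

Definition is_simb (o : option label) : bool :=
  if o is Some Lsim then true else false.

Definition nsim (t : tree) (u : node) : nat :=
  count (fun n => is_simb (t (take n u))) (iota 0 (size u)).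
Definition switched (t : tree) (u : node) : bool := odd (nsim t u).

Definition controlled (t : tree) (P : player) (u : node) : Prop :=
  (~~ switched t u /\ t u = Some (Lc P)) \/
  (switched t u /\ t u = Some (Lc (opp P))).

(* infinite branches: b : nat -> nat, n-th node = first n directions *)
Definition pre (b : nat -> nat) (n : nat) : node := map b (iota 0 n).
Definition branch_in (S : node -> Prop) (b : nat -> nat) : Prop :=
  forall n, S (pre b n).
Definition inf_often (Q : node -> Prop) (b : nat -> nat) : Prop :=
  forall N, exists n, N <= n /\ Q (pre b n).

Definition well_formed (t : tree) : Prop :=
  forall b, branch_in (in_dom t) b -> ~ inf_often (fun u => t u = Some Lsim) b.

Definition inf_p (t : tree) (b : nat -> nat) (j : nat) : Prop :=
  inf_often (fun u => t u = Some (Lp j)) b.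

Definition min_prio (k : nat) (t : tree) (b : nat -> nat) (j : nat) : Prop :=
  (inf_p t b j /\ forall j', j' < j -> ~ inf_p t b j') \/
  (j = k /\ forall j', ~ inf_p t b j').

Definition ev_kept (t : tree) (b : nat -> nat) : Prop :=
  exists N, forall n, N <= n -> ~~ switched t (pre b n).
Definition ev_switched (t : tree) (b : nat -> nat) : Prop :=
  exists N, forall n, N <= n -> switched t (pre b n).

Definition won_by_1 (k : nat) (t : tree) (b : nat -> nat) : Prop :=
  exists j, min_prio k t b j /\
    ((ev_kept t b /\ ~~ odd j) \/ (ev_switched t b /\ odd j)).

Definition won_by (k : nat) (t : tree) (P : player) (b : nat -> nat) : Prop :=
  if P is P1 then won_by_1 k t b else ~ won_by_1 k t b.

Definition is_strategy (t : tree) (P : player) (Sg : node -> Prop) : Prop :=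
  [/\ Sg [::],
      (forall u, Sg u -> in_dom t u),
      (forall u w, Sg (u ++ w) -> Sg u),
      (forall u, Sg u -> controlled t P u ->
         exists n, Sg (rcons u n) /\ forall n', Sg (rcons u n') -> n' = n)
    & (forall u, Sg u -> ~ controlled t P u ->
         forall n, in_dom t (rcons u n) -> Sg (rcons u n))].

Definition winning (k : nat) (t : tree) (P : player) (Sg : node -> Prop) : Prop :=
  is_strategy t P Sg /\ forall b, branch_in Sg b -> won_by k t P b.

Definition losingb (i k : nat) (P : player) (j : nat) : bool :=
  (i <= j <= k) && (if P is P1 then odd j else ~~ odd j).

Definition active (i k : nat) (t : tree) (P : player) (Sg : node -> Prop)
    (u : node) : Prop :=
  Sg u /\ exists j, [/\ t u = Some (Lp j), losingb i k P j &
    forall n, n < size u ->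
      t (take n u) <> Some Lsim /\
      forall j', j' < j -> t (take n u) <> Some (Lp j')].

Definition act_at (i k : nat) (t : tree) (P : player) (Sg : node -> Prop)
    (u : node) (j : nat) (w : node) : Prop :=
  [/\ active i k t P Sg w, prefix u w &
      exists j'', t w = Some (Lp j'') /\ j'' <= j].

Definition succ_at (i k : nat) (t : tree) (P : player) (Sg : node -> Prop)
    (u w : node) : Prop :=
  [/\ active i k t P Sg w, prefix u w &
      forall w', active i k t P Sg w' -> prefix u w' -> prefix w' w -> w' = w].

(* Tuples (theta_{i'}, theta_{i'+2}, ..., theta_{k'}) : only the entries
   at P-losing indices matter.  Truncation |m keeps indices <= m.       *)
Definition tuple := nat -> Ord.

Definition losidx (i k : nat) (P : player) (m : nat) : seq nat :=
  [seq j <- iota i (k.+1 - i) | losingb i k P j && (j <= m)].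

Fixpoint lexle (l : seq nat) (a b : tuple) : Prop :=
  match l with
  | [::] => True
  | j :: l' => olt (a j) (b j) \/ (oeq (a j) (b j) /\ lexle l' a b)
  end.

Definition lexeq (l : seq nat) (a b : tuple) : Prop :=
  forall j, j \in l -> oeq (a j) (b j).

(* x is a (the) supremum of S w.r.t. the lexicographic order on l;
   for empty S this forces x to be the all-zero tuple (up to oeq). *)
Definition is_lub (l : seq nat) (S : tuple -> Prop) (x : tuple) : Prop :=
  (forall y, S y -> lexle l y x) /\
  (forall z, (forall y, S y -> lexle l y z) -> lexle l x z).

Definition bump (j : nat) (th : tuple) : tuple :=
  fun j' => if j' < j then th j' else if j' == j then OS (th j) else OZ.

Definition s_eqs (i k : nat) (P : player) (t : tree) (Sg : node -> Prop)
    (f : node -> tuple) : Prop :=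
  forall u, Sg u ->
    (forall j, active i k t P Sg u -> t u = Some (Lp j) ->
       lexeq (losidx i k P k) (f u) (bump j (f (rcons u 0)))) /\
    (~ active i k t P Sg u ->
       is_lub (losidx i k P k) (fun x => exists w, succ_at i k t P Sg u w /\ x = f w)
              (f u)).

(* s(., Sg): the function defined by well-founded recursion along >>,
   i.e. (a choice of) the solution of the equations (a), (b). *)
Definition s_fun (i k : nat) (P : player) (t : tree) (Sg : node -> Prop) :
    node -> tuple :=
  epsilon (inhabits (fun _ _ => OZ)) (s_eqs i k P t Sg).

(* Main.v *)
Require Import Defs.
From mathcomp Require Import all_boot zify.
From Stdlib Require Import Classical ClassicalEpsilon FunctionalExtensionality PropExtensionality.
Set Implicit Arguments.
Unset Strict Implicit.
Unset Printing Implicit Defensive.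


Notation tup := Defs.tuple.

Lemma oleSS x y : ole (OS x) (OS y) = ole x y. Proof. by []. Qed.
Lemma oleSL x g : ole (OS x) (OL g) = exists n, ole (OS x) (g n). Proof. by []. Qed.
Lemma oleSZ x : ~ ole (OS x) OZ. Proof. by []. Qed.

Lemma ole_OL_r x g n : ole x (g n) -> ole x (OL g).
Proof.
elim: x => [|x IH|f IH] //=.
- by move=> H; exists n.
- by move=> H m; apply: IH.
Qed.

Lemma ole_refl x : ole x x.
Proof.
elim: x => [|x IH|f IH] //= n; exact: (@ole_OL_r _ f n).
Qed.

Lemma ole_trans x y z : ole x y -> ole y z -> ole x z.
Proof.
elim: x y z => [|x IHx|f IHf] y z //.
- elim: y z => [|y IHy|g IHg] z //.
  + change (ole x y -> ole (OS y) z -> ole (OS x) z) => Hxy.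
    elim: z => [|z IHz|h IHh] //.
    * change (ole y z -> ole x z); exact: IHx.
    * change ((exists n, ole (OS y) (h n)) -> exists n, ole (OS x) (h n)).
      move=> -[n Hn]; exists n; exact: IHh.
  + change ((exists n, ole (OS x) (g n)) -> (forall n, ole (g n) z) -> ole (OS x) z).
    move=> -[n Hn] Hz; exact: (IHg n z Hn (Hz n)).
- move=> H1 H2 n; exact: IHf (H1 n) H2.
Qed.

Lemma ole_S x : ole x (OS x).
Proof.
elim: x => [|x IH|f IH] //= n.
apply: ole_trans (IH n) _; change (ole (f n) (OL f)); exact: (@ole_OL_r _ f n (ole_refl _)).
Qed.

Lemma olt_ole x y : ole (OS x) y -> ole x y.
Proof. move=> H; exact: ole_trans (ole_S x) H. Qed.

Lemma olt_irrefl x : ~ ole (OS x) x.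
Proof.
elim: x => [|x IH|f IH] //.
change ((exists n, ole (OS (OL f)) (f n)) -> False) => -[n Hn]; apply: (IH n).
apply: ole_trans _ Hn; change (ole (f n) (OL f)); exact: (@ole_OL_r _ f n (ole_refl _)).
Qed.

Lemma ole_total x y : ole x y \/ ole (OS y) x.
Proof.
elim: x y => [|x IHx|f IHf] y; first by left.
- elim: y => [|y IHy|g IHg]; first by right.
  + case: (IHx y) => H; [left|right] => //.
  + case: (classic (exists n, ole (OS x) (g n))) => H; first by left.
    right => /= n; case: (IHg n) => // H'; exfalso; apply: H; by exists n.
- case: (classic (exists n, ole (OS y) (f n))) => H.
  + by right; case: H => n Hn; apply: ole_OL_r Hn.
  + left => n; case: (IHf n y) => // H'; exfalso; apply: H; by exists n.
Qed.

Lemma olt_le_false x y : ole (OS x) y -> ole y x -> False.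
Proof. move=> H1 H2; exact: olt_irrefl (ole_trans H1 H2). Qed.

Lemma oeq_refl x : oeq x x. Proof. split; exact: ole_refl. Qed.
Lemma oeq_sym x y : oeq x y -> oeq y x. Proof. by case. Qed.
Lemma oeq_trans x y z : oeq x y -> oeq y z -> oeq x z.
Proof. case=> ? ? [] ? ?; split; apply: ole_trans; eassumption. Qed.

Lemma lexle_refl l a : lexle l a a.
Proof. elim: l => //= j l IH; right; split => //; exact: oeq_refl. Qed.

Lemma lexle_trans l a b c : lexle l a b -> lexle l b c -> lexle l a c.
Proof.
elim: l => //= j l IH [H1|[H1 H1r]] [H2|[H2 H2r]].
- left; exact: ole_trans H1 (olt_ole H2).
- left; exact: ole_trans H1 H2.1.
- left; case: H1 => H1 _; exact: (ole_trans (H1 : ole (OS (a j)) (OS (b j))) H2).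
- right; split; [exact: oeq_trans H1 H2|exact: IH].
Qed.

Lemma lexle_antisym l a b : lexle l a b -> lexle l b a -> lexeq l a b.
Proof.
elim: l => [|j l IH] /=; first by move=> _ _ m.
move=> [H1|[[H1 H1'] H1r]] [H2|[[H2 H2'] H2r]].
- exfalso; exact: olt_le_false H1 (olt_ole H2).
- exfalso; exact: olt_le_false H1 H2.
- exfalso; exact: olt_le_false H2 H1.
- move=> m; rewrite inE => /orP[/eqP->|Hm]; first by split.
  exact: IH.
Qed.

Lemma lexeq_cons j l a b : lexeq (j :: l) a b -> oeq (a j) (b j) /\ lexeq l a b.
Proof.
move=> H; split; first by apply: H; rewrite inE eqxx.
by move=> m Hm; apply: H; rewrite inE Hm orbT.
Qed.

Lemma lexeq_sym l a b : lexeq l a b -> lexeq l b a.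
Proof. move=> H m Hm; exact: oeq_sym (H m Hm). Qed.
Lemma lexeq_trans l a b c : lexeq l a b -> lexeq l b c -> lexeq l a c.
Proof. move=> H1 H2 m Hm; exact: oeq_trans (H1 m Hm) (H2 m Hm). Qed.
Lemma lexeq_refl l a : lexeq l a a.
Proof. move=> m _; exact: oeq_refl. Qed.
Lemma lexeq_sub l1 l2 a b : {subset l1 <= l2} -> lexeq l2 a b -> lexeq l1 a b.
Proof. move=> S H m Hm; exact: H (S m Hm). Qed.

Lemma lexle_eq_l l a a' b : lexeq l a a' -> lexle l a b -> lexle l a' b.
Proof.
elim: l => //= j l IH /lexeq_cons [[E1 E2] El] [H|[H Hr]].
- left; apply: ole_trans _ H; by rewrite oleSS.
- right; split; [exact: oeq_trans (conj E2 E1) H|exact: IH].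
Qed.

Lemma lexle_eq_r l a b b' : lexeq l b b' -> lexle l a b -> lexle l a b'.
Proof.
elim: l => //= j l IH /lexeq_cons [[E1 E2] El] [H|[H Hr]].
- left; exact: ole_trans H E1.
- right; split; [exact: oeq_trans H (conj E1 E2)|exact: IH].
Qed.

Lemma lexle_head j l a b : lexle (j :: l) a b -> ole (a j) (b j).
Proof. by case=> [H|[[H _] _]] //; exact: olt_ole. Qed.

Lemma lexle_app l1 l2 a b : lexle (l1 ++ l2) a b -> lexle l1 a b.
Proof. elim: l1 => //= j l IH [H|[H Hr]]; [by left|right; split => //; exact: IH]. Qed.

Lemma lexle_zero l z : lexle l (fun _ => OZ) z.
Proof.
elim: l => //= j l IH; case: (ole_total (z j) OZ) => H.
- by right; split.
- by left.
Qed.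

Lemma lexle_lexeq l a b : lexeq l a b -> lexle l a b.
Proof. move=> H; apply: lexle_eq_r H _; exact: lexle_refl. Qed.


Definition fam (R : node -> Prop) (F : node -> tup) : tup -> Prop :=
  fun y => exists w, R w /\ y = F w.

Definition theta (R : node -> Prop) (F : node -> tup) (j : nat) : Ord :=
  OL (fun n => match unpickle n with
               | Some w => if excluded_middle_informative (R w) then F w j else OZ
               | None => OZ end).

Lemma theta_ub R F j w : R w -> ole (F w j) (theta R F j).
Proof.
move=> Hw; apply: (@ole_OL_r (F w j) _ (pickle w)).
have -> : unpickle (pickle w) = Some w := pickleK w.
by destruct (excluded_middle_informative (R w)) => //=; exact: ole_refl.
Qed.

Lemma theta_least R F j z : (forall w, R w -> ole (F w j) z) -> ole (theta R F j) z.
Proof.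
move=> H n; case: (unpickle n) => [w|] //.
by destruct (excluded_middle_informative (R w)) => //=; exact: H.
Qed.

Definition setj (j : nat) (o : Ord) (x : tup) : tup :=
  fun m => if m == j then o else x m.

Lemma lexeq_setj l j o x : j \notin l -> lexeq l (setj j o x) x.
Proof.
move=> Hj m Hm; rewrite /setj; case: eqP => [E|_]; last exact: oeq_refl.
by subst; rewrite Hm in Hj.
Qed.


Lemma is_lub_eq l S x x' : lexeq l x x' -> is_lub l S x -> is_lub l S x'.
Proof.
move=> E [H1 H2]; split.
- move=> y Hy; exact: lexle_eq_r E (H1 y Hy).
- move=> z Hz; exact: lexle_eq_l E (H2 z Hz).
Qed.

Lemma is_lub_uniq l S x x' : is_lub l S x -> is_lub l S x' -> lexeq l x x'.
Proof.
move=> [H1 H2] [H3 H4]; apply: lexle_antisym; [exact: H2|exact: H4].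
Qed.

Lemma is_lub_ext l S1 S2 x : (forall y, S1 y <-> S2 y) -> is_lub l S1 x -> is_lub l S2 x.
Proof.
move=> E [H1 H2]; split.
- move=> y /E; exact: H1.
- move=> z Hz; apply: H2 => y /E; exact: Hz.
Qed.

Definition zero : tup := fun _ => OZ.

Section Build.
Variables (L : seq nat) (j : nat) (R : node -> Prop) (F : node -> tup).
Hypothesis Hj : j \notin L.
Let th := theta R F j.
Let R' := fun w => R w /\ oeq (F w j) th.
Let ach := exists w, R' w.

Definition lub_prem (x : tup) :=
  [/\ oeq (x j) th, (ach -> is_lub L (fam R' F) x) & (~ ach -> lexeq L x zero)].

Lemma lub_build x : lub_prem x -> is_lub (j :: L) (fam R F) x.
Proof.
case=> Exj Hach Hnach; split.
- move=> y [w [Hw ->]] /=.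
  case: (ole_total th (F w j)) => H.
  + have Ha : R' w by split => //; split => //; exact: theta_ub.
    right; split; first by exact: oeq_trans Ha.2 (oeq_sym Exj).
    apply: (proj1 (Hach (ex_intro _ w Ha))); by exists w.
  + left; exact: ole_trans H Exj.2.
- move=> z Hz /=.
  have Hth : ole th (z j).
    apply: theta_least => w Hw; apply: lexle_head (Hz _ _); by exists w.
  case: (ole_total (z j) (x j)) => H.
  + right; split; first by split => //; exact: ole_trans Exj.1 Hth.
    case: (classic ach) => Ha.
    * apply: (proj2 (Hach Ha)) => y [w [[Hw Hwe] ->]].
      case: (Hz (F w) (ex_intro _ w (conj Hw erefl))) => [Hl|[_ Hr]] //.
      exfalso; apply: olt_le_false Hl _; apply: ole_trans H _.
      apply: ole_trans Exj.1 _; exact: Hwe.2.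
    * apply: lexle_eq_l (lexeq_sym (Hnach Ha)) _; exact: lexle_zero.
  + by left.
Qed.

Lemma lub_construct : (forall R'', exists x', is_lub L (fam R'' F) x') ->
  exists x, lub_prem x.
Proof.
move=> IH; case: (classic ach) => Ha.
- case: (IH R') => x' Hx'; exists (setj j th x'); split.
  + rewrite /setj eqxx; exact: oeq_refl.
  + move=> _; apply: is_lub_eq Hx'; apply: lexeq_sym; exact: lexeq_setj.
  + by [].
- exists (setj j th zero); split.
  + rewrite /setj eqxx; exact: oeq_refl.
  + by [].
  + move=> _; exact: lexeq_setj.
Qed.

Lemma lub_char x : (forall R'', exists x', is_lub L (fam R'' F) x') ->
  is_lub (j :: L) (fam R F) x -> lub_prem x.
Proof.
move=> IH Hx; case: (lub_construct IH) => x0 H0.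
have E := is_lub_uniq Hx (lub_build H0).
have [Ej EL] := lexeq_cons E.
case: H0 => E0 H0a H0n; split.
- exact: oeq_trans Ej E0.
- move=> Ha; apply: is_lub_eq (lexeq_sym EL) (H0a Ha).
- move=> Ha; exact: lexeq_trans EL (H0n Ha).
Qed.
End Build.

Lemma lub_exists l R F : uniq l -> exists x, is_lub l (fam R F) x.
Proof.
elim: l R => [|j L IH] R.
- by move=> _; exists zero; split.
- move=> /= /andP [Hj HL].
  have [x Hx] := @lub_construct L j R F Hj (fun R'' => IH R'' HL).
  exists x; exact: lub_build Hx.
Qed.

Lemma lub_trunc l1 l2 R F x : uniq (l1 ++ l2) ->
  is_lub (l1 ++ l2) (fam R F) x -> is_lub l1 (fam R F) x.
Proof.
elim: l1 R => [|j l1 IH] R.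
- by move=> _ _; split.
- rewrite cat_cons => /= /andP [Hj HL] Hx.
  have Hj' : j \notin l1 by move: Hj; rewrite mem_cat negb_or => /andP[].
  have [E Ha Hn] := lub_char (R:=R) Hj (fun R'' => lub_exists R'' F HL) Hx.
  apply: lub_build; split => //.
  + move=> A; exact: IH (Ha A).
  + move=> A; apply: lexeq_sub (Hn A) => m Hm; by rewrite mem_cat Hm.
Qed.

Lemma lub_corr l S1 S2 x1 x2 : is_lub l S1 x1 -> is_lub l S2 x2 ->
  (forall y1, S1 y1 -> exists y2, S2 y2 /\ lexeq l y1 y2) ->
  (forall y2, S2 y2 -> exists y1, S1 y1 /\ lexeq l y1 y2) -> lexeq l x1 x2.
Proof.
move=> [A1 B1] [A2 B2] C12 C21; apply: lexle_antisym.
- apply: B1 => y1 /C12 [y2 [Hy2 E]]; exact: lexle_eq_l (lexeq_sym E) (A2 _ Hy2).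
- apply: B2 => y2 /C21 [y1 [Hy1 E]]; exact: lexle_eq_l E (A1 _ Hy1).
Qed.

Lemma lub_corr2 l S1 S2 x : is_lub l S2 x ->
  (forall y1, S1 y1 -> exists y2, S2 y2 /\ lexeq l y1 y2) ->
  (forall y2, S2 y2 -> exists y1, S1 y1 /\ lexeq l y1 y2) -> is_lub l S1 x.
Proof.
move=> [A2 B2] C12 C21; split.
- move=> y1 /C12 [y2 [Hy2 E]]; exact: lexle_eq_l (lexeq_sym E) (A2 _ Hy2).
- move=> z Hz; apply: B2 => y2 /C21 [y1 [Hy1 E]]; exact: lexle_eq_l E (Hz _ Hy1).
Qed.


Section Losidx.
Variables (i k : nat) (P : player).

Lemma losidx_uniq m : uniq (losidx i k P m).
Proof. by rewrite /losidx filter_uniq // iota_uniq. Qed.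

Lemma losidx_sorted m : sorted ltn (losidx i k P m).
Proof. rewrite /losidx; apply: sorted_filter; [exact: ltn_trans|exact: iota_ltn_sorted]. Qed.

Lemma losing_le x : losingb i k P x -> i <= x <= k.
Proof. by rewrite /losingb => /andP[]. Qed.

Lemma mem_losidx m x : (x \in losidx i k P m) = losingb i k P x && (x <= m).
Proof.
rewrite /losidx mem_filter mem_iota.
case Hl: (losingb i k P x) => //=; case: (x <= m) => //=.
move/losing_le: Hl => /andP[H1 H2]; apply/andP; split => //; lia.
Qed.

Lemma filter_split (a : pred nat) (j : nat) (s : seq nat) : sorted ltn s ->
  [seq x <- s | a x && (x <= j)] ++ [seq x <- s | a x && (j < x)] = [seq x <- s | a x].
Proof.
elim: s => //= x s IH Hs.
have Hs' := path_sorted Hs.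
case: (leqP x j) => Hx.
- rewrite andbT andbF; case: (a x) => /=; by rewrite IH.
- have Hall : all (ltn x) s := order_path_min ltn_trans Hs.
  have -> : [seq y <- s | a y && (y <= j)] = [::].
    apply/eqP; rewrite -[_ == _]negbK -has_filter; apply/hasPn => y Hy.
    have := allP Hall y Hy => /= Hxy; rewrite negb_and -ltnNge.
    by rewrite (ltn_trans Hx Hxy) orbT.
  rewrite andbF andbT /=; congr (_ :: _) || idtac.
  have -> : [seq y <- s | a y && (j < y)] = [seq y <- s | a y].
    apply: eq_in_filter => y Hy; have := allP Hall y Hy => /= Hxy.
    by rewrite (ltn_trans Hx Hxy) andbT.
  by case: (a x).
Qed.

Lemma losidx_split j : exists L2, losidx i k P k = losidx i k P j ++ L2.
Proof.
exists [seq x <- iota i (k.+1 - i) | losingb i k P x && (x <= k) & j < x].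
rewrite {1}/losidx.
rewrite -(filter_split (fun x => losingb i k P x && (x <= k)) j); last exact: iota_ltn_sorted.
congr (_ ++ _).
apply: eq_filter => x /=.
case Hl: (losingb i k P x) => //=; move/losing_le: Hl => /andP[_ ->] //.
Qed.
End Losidx.

Lemma lexle_bump_in l a j0 : sorted ltn l -> j0 \in l -> lexle l a (Defs.bump j0 a).
Proof.
elim: l => //= m l IH Hs; rewrite inE => Hj.
case: (eqVneq m j0) => [E|N].
- subst m; left; rewrite /Defs.bump ltnn eqxx; exact: ole_refl.
- rewrite eq_sym (negbTE N) /= in Hj.
  have Hall : all (ltn m) l := order_path_min ltn_trans Hs.
  have Hm : m < j0 := allP Hall j0 Hj.
  right; split; first by rewrite /Defs.bump Hm; exact: oeq_refl.
  exact: IH (path_sorted Hs) Hj.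
Qed.

Lemma lexeq_bump_lt l a j0 : (forall m, m \in l -> m < j0) -> lexeq l a (Defs.bump j0 a).
Proof. move=> H m Hm; rewrite /Defs.bump H //; exact: oeq_refl. Qed.

Lemma lexeq_bump2 l1 l2 j a b : (forall m, m \in l2 -> m <= j -> m \in l1) ->
  lexeq l1 a b -> lexeq l2 (Defs.bump j a) (Defs.bump j b).
Proof.
move=> Hs E m Hm; rewrite /Defs.bump.
case: (ltnP m j) => H1.
- apply: E; apply: Hs => //; exact: ltnW.
- case: eqP => [E'|_]; last exact: oeq_refl.
  subst m; have [H2 H3] := E j (Hs j Hm (leqnn j)); by split.
Qed.


Notation pref := Defs.prefix.

Lemma catI (w u v : node) : w ++ u = w ++ v -> u = v.
Proof. elim: w => //= a w IH [] H; exact: IH. Qed.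

Lemma pref_refl u : pref u u. Proof. by exists [::]; rewrite cats0. Qed.
Lemma pref_nil u : pref [::] u. Proof. by exists u. Qed.
Lemma pref_trans u v w : pref u v -> pref v w -> pref u w.
Proof. move=> [a ->] [b ->]; exists (a ++ b); by rewrite catA. Qed.
Lemma pref_size u w : pref u w -> size u <= size w.
Proof. move=> [a ->]; rewrite size_cat; exact: leq_addr. Qed.
Lemma pref_take u w : pref u w -> u = take (size u) w.
Proof. move=> [a ->]; by rewrite take_size_cat. Qed.
Lemma pref_takeI n w : pref (take n w) w.
Proof. exists (drop n w); by rewrite cat_take_drop. Qed.
Lemma pref_eq u w : pref u w -> size u = size w -> u = w.
Proof. move=> [a ->]; rewrite size_cat => H; have -> : a = [::] by apply/nilP; rewrite /nilp; lia. by rewrite cats0. Qed.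
Lemma pref_rcons u n : pref u (rcons u n). Proof. by exists [:: n]; rewrite cats1. Qed.
Lemma pref_cat2 w u v : pref (w ++ u) (w ++ v) <-> pref u v.
Proof.
split; move=> [a E]; exists a; last by rewrite E catA.
by apply: (@catI w); rewrite catA.
Qed.
Lemma pref_neq_lt u w : pref u w -> u <> w -> size u < size w.
Proof.
move=> H N; have := pref_size H; rewrite leq_eqVlt => /orP[/eqP E|//].
by exfalso; apply: N; apply: pref_eq.
Qed.
Lemma pref_take_take m n w : m <= n -> pref (take m w) (take n w).
Proof.
move=> H; exists (take (n - m) (drop m w)).
by rewrite -takeD subnKC.
Qed.

Definition labj (o : option label) : nat := if o is Some (Lp j) then j else 0.

Section Gen.
Variables (i k : nat) (P : player) (t : tree) (Sg : node -> Prop).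
Notation act := (active i k t P Sg).
Definition Rg (w u : node) : Prop :=
  Sg u /\ Sg w /\ pref u w /\ u <> w /\ exists a, act a /\ pref u a /\ pref a w.
Hypothesis H1 : forall u w, Sg (u ++ w) -> Sg u.
Hypothesis H2 : forall u j, Sg u -> t u = Some (Lp j) ->
  Sg (rcons u 0) /\ forall n, Sg (rcons u n) -> n = 0.

Lemma act_lab u : act u -> exists j, t u = Some (Lp j) /\ losingb i k P j.
Proof. by case=> _ [j [H1' H2' _]]; exists j. Qed.

Lemma Rg_child u : act u -> Rg (rcons u 0) u.
Proof.
move=> Hu; have [j [Hj _]] := act_lab Hu.
have Su : Sg u by case: Hu.
split => //; split; first exact: (H2 Su Hj).1.
split; first exact: pref_rcons.
split; first by move=> E; have := congr1 size E; rewrite size_rcons; lia.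
exists u; split => //; split; [exact: pref_refl|exact: pref_rcons].
Qed.

Lemma Rg_succ u w : Sg u -> ~ act u -> succ_at i k t P Sg u w -> Rg w u.
Proof.
move=> Su Nu [Aw Puw _]; split => //; split; first by case: Aw.
split => //; split; first by move=> E; subst; apply: Nu.
exists w; split => //; split => //; exact: pref_refl.
Qed.

Lemma pref_child u w j : Sg w -> pref u w -> u <> w -> t u = Some (Lp j) ->
  pref (rcons u 0) w.
Proof.
move=> Sw [[|c v] E] N Hj; first by exfalso; apply: N; rewrite E cats0.
have Sc : Sg (rcons u c) by apply: (H1 (w := v)); rewrite cat_rcons -E.
have Su : Sg u by apply: (H1 (w := [:: c])); rewrite cats1.
have := (H2 Su Hj).2 c Sc => ?; subst c.
by exists v; rewrite cat_rcons.
Qed.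

Lemma succ_exists u w' : act w' -> pref u w' ->
  exists w, succ_at i k t P Sg u w /\ pref w w'.
Proof.
move: {2}(size w') (leqnn (size w')) => n; elim: n w' => [|n IH] w' Hs Aw' Puw'.
- case: (classic (forall w'', act w'' -> pref u w'' -> pref w'' w' -> w'' = w')) => H.
  + exists w'; split; [by split|exact: pref_refl].
  + exfalso; apply: H; move=> w'' A1 A2 Hp; have Hsz := pref_size Hp.
    apply: pref_eq Hp _; lia.
- case: (classic (forall w'', act w'' -> pref u w'' -> pref w'' w' -> w'' = w')) => H.
  + exists w'; split; [by split|exact: pref_refl].
  + have [w'' Hw''] : exists w'', act w'' /\ pref u w'' /\ pref w'' w' /\ w'' <> w'.
      apply: NNPP => C; apply: H => w'' A1 A2 A3; apply: NNPP => A4; apply: C.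
      by exists w''.
    case: Hw'' => A1 [A2 [A3 A4]].
    have Hlt := pref_neq_lt A3 A4.
    have [w [Sw Pw]] := IH w'' ltac:(lia) A1 A2.
    exists w; split => //; exact: pref_trans Pw A3.
Qed.

Hypothesis HAcc : well_founded Rg.

Let L := losidx i k P k.

Definition Fs (u : node) (g : forall w, Rg w u -> tup) : tup :=
  match excluded_middle_informative (act u) with
  | left _ => match excluded_middle_informative (Rg (rcons u 0) u) with
      | left h => Defs.bump (labj (t u)) (g _ h)
      | right _ => zero end
  | right _ => epsilon (inhabits zero)
      (is_lub L (fun y => exists w (h : Rg w u), succ_at i k t P Sg u w /\ y = g w h))
  end.

Definition fsol := Fix HAcc (fun _ => tup) Fs.

Lemma Fs_ext x (f g : forall y, Rg y x -> tup) :
  (forall y p, f y p = g y p) -> @Fs x f = @Fs x g.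
Proof.
move=> E; rewrite /Fs.
case: excluded_middle_informative => // _.
- case: excluded_middle_informative => // h; by rewrite E.
- have -> : (fun y => exists w (h : Rg w x), succ_at i k t P Sg x w /\ y = f w h) =
            (fun y => exists w (h : Rg w x), succ_at i k t P Sg x w /\ y = g w h) => //.
  apply: functional_extensionality => y; apply: propositional_extensionality.
  split=> -[w [h [S1 S2]]]; exists w, h; split => //; by rewrite S2 E.
Qed.

Lemma fsol_eq u : fsol u = @Fs u (fun w _ => fsol w).
Proof. rewrite /fsol Fix_eq //; exact: Fs_ext. Qed.

Lemma fsol_eqs : s_eqs i k P t Sg fsol.
Proof.
move=> u Su; split.
- move=> j Au Hj; rewrite fsol_eq /Fs.
  case: excluded_middle_informative => // _.
  case: excluded_middle_informative => [h|]; last by move=> N; exfalso; apply: N; exact: Rg_child.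
  rewrite Hj; exact: lexeq_refl.
- move=> Nu; rewrite fsol_eq /Fs.
  case: excluded_middle_informative => // _.
  have [x Hx] := lub_exists (succ_at i k t P Sg u) fsol (losidx_uniq i k P k).
  have Ex : exists x, is_lub L (fun y => exists w (h : Rg w u),
                 succ_at i k t P Sg u w /\ y = fsol w) x.
    exists x; apply: is_lub_ext Hx => y; split.
    + move=> [w [Sw ->]]; exists w, (Rg_succ Su Nu Sw); by split.
    + by move=> [w [h [Sw ->]]]; exists w.
  have := epsilon_spec (inhabits zero) _ Ex.
  apply: is_lub_ext => y; split.
  + by move=> [w [h [Sw ->]]]; exists w.
  + move=> [w [Sw ->]]; exists w, (Rg_succ Su Nu Sw); by split.
Qed.

Lemma s_fun_eqs : s_eqs i k P t Sg (s_fun i k P t Sg).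
Proof. rewrite /s_fun; apply: epsilon_spec; exists fsol; exact: fsol_eqs. Qed.


Lemma losidx_subk j : {subset losidx i k P j <= L}.
Proof.
move=> m; rewrite /L !mem_losidx => /andP[Hm _]; rewrite Hm /=.
by case/andP: (losing_le Hm).
Qed.

Lemma part1 f : s_eqs i k P t Sg f -> forall u, Sg u -> forall j, losingb i k P j ->
  is_lub (losidx i k P j) (fam (act_at i k t P Sg u j) f) (f u).
Proof.
move=> Hf u; elim: (HAcc u) => {}u _ IH Su j Hj.
have [Ha Hn] := Hf u Su.
case: (classic (act u)) => Au.
- have [j0 [Hj0 Hl0]] := act_lab Au.
  have Eu := Ha j0 Au Hj0.
  have Ru0 := Rg_child Au.
  have Su0 : Sg (rcons u 0) := Ru0.2.1.
  have IH0 := IH _ Ru0 Su0 j Hj.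
  have Euj := lexeq_sub (@losidx_subk j) Eu.
  have Hdesc : forall w, act_at i k t P Sg u j w -> w <> u -> act_at i k t P Sg (rcons u 0) j w.
    move=> w [Aw Pw Lw] N; split => //; apply: pref_child (proj1 Aw) Pw _ Hj0.
    by move=> E; apply: N.
  case: (leqP j0 j) => Hjj.
  + split.
    * move=> y [w [Hw ->]]; case: (classic (w = u)) => [->|N]; first exact: lexle_refl.
      apply: lexle_trans ((proj1 IH0) _ (ex_intro _ w (conj (Hdesc w Hw N) erefl))) _.
      apply: lexle_eq_r (lexeq_sym Euj) _.
      apply: lexle_bump_in; [exact: losidx_sorted| by rewrite mem_losidx Hl0 Hjj].
    * move=> z Hz; apply: Hz; exists u; split => //; split => //; [exact: pref_refl| by exists j0].
  + have Hlt : forall m, m \in losidx i k P j -> m < j0.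
      move=> m; rewrite mem_losidx => /andP[_ Hm]; exact: leq_ltn_trans Hm Hjj.
    apply: is_lub_eq (lexeq_trans (lexeq_bump_lt _ Hlt) (lexeq_sym Euj)) _.
    apply: is_lub_ext IH0 => y; split.
    * move=> [w [Hw ->]]; exists w; split => //; case: Hw => Aw Pw Lw; split => //.
      exact: pref_trans (pref_rcons u 0) Pw.
    * move=> [w [Hw ->]]; exists w; split => //; apply: Hdesc => // E; subst w.
      case: Hw => _ _ [j'' [H1' H2']]; rewrite Hj0 in H1'; case: H1' => ?; subst; lia.
- have Hk := Hn Au.
  have [L2 EL] := losidx_split i k P j.
  have Hkj : is_lub (losidx i k P j) (fam (succ_at i k t P Sg u) f) (f u).
    apply: (@lub_trunc _ L2); rewrite -EL; [exact: losidx_uniq|exact: Hk].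
  split.
  + move=> y [w' [Hw' ->]]; case: Hw' => Aw' Pw' Lw'.
    have [w [Sw Pww]] := succ_exists Aw' Pw'.
    apply: lexle_trans (_ : lexle _ (f w') (f w)) (proj1 Hkj _ (ex_intro _ w (conj Sw erefl))).
    have Rw := Rg_succ Su Au Sw.
    apply: (proj1 (IH w Rw Rw.2.1 j Hj)); exists w'; split => //; by split.
  + move=> z Hz; apply: (proj2 Hkj) => y [w [Sw ->]].
    have Rw := Rg_succ Su Au Sw.
    apply: (proj2 (IH w Rw Rw.2.1 j Hj)) => y' [w' [Hw' ->]]; apply: Hz; exists w'; split => //.
    case: Hw' => A1 A2 A3; split => //; case: Sw => _ B _; exact: pref_trans B A2.
Qed.

End Gen.


Lemma size_pre b n : size (pre b n) = n.
Proof. by rewrite /pre size_map size_iota. Qed.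

Lemma take_pre b m n : m <= n -> take m (pre b n) = pre b m.
Proof. move=> H; rewrite /pre -map_take take_iota; congr (map _ (iota _ _)); lia. Qed.

Lemma ex_min_nat (Q : nat -> Prop) : (exists m, Q m) -> exists m, Q m /\ forall m', Q m' -> m <= m'.
Proof.
move=> [m Hm]; apply: NNPP => C.
suff : forall n, forall m, m <= n -> ~ Q m by move/(_ m m (leqnn m)).
elim=> [|n IH] m' Hm' Qm'.
- apply: C; exists m'; split => // m'' _; lia.
- case: (leqP m' n) => H; first exact: IH H Qm'.
  apply: C; exists m'; split => // m'' Q''; case: (leqP m' m'') => // H'.
  exfalso; apply: (IH m'') => //; lia.
Qed.

Section WF.
Variables (i k : nat) (P : player) (t : tree) (Sg : node -> Prop).
Hypothesis H1 : forall u w, Sg (u ++ w) -> Sg u.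
Hypothesis Hwin : forall b, branch_in Sg b -> won_by k t P b.

Definition actr (w0 a : node) : Prop :=
  Sg a /\ pref w0 a /\ exists j, [/\ t a = Some (Lp j), losingb i k P j &
    forall n, size w0 <= n < size a -> t (take n a) <> Some Lsim /\
      forall j', j' < j -> t (take n a) <> Some (Lp j')].

Definition Rr (w0 : node) (w u : node) : Prop :=
  Sg u /\ Sg w /\ pref u w /\ u <> w /\ exists a, actr w0 a /\ pref u a /\ pref a w.

Variable w0 : node.
Hypothesis Hw0 : forall n, n < size w0 -> t (take n w0) <> Some Lsim.

Lemma min_prio_uniq b j1 j2 : min_prio k t b j1 -> inf_p t b j2 ->
  (forall j', j' < j2 -> ~ inf_p t b j') -> j1 = j2.
Proof.
move=> [[I1 M1]|[_ N1]] I2 M2; last by exfalso; exact: N1 I2.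
case: (ltngtP j1 j2) => // H; [exfalso; exact: M2 H I1|exfalso; exact: M1 H I2].
Qed.

Lemma game_contra b : branch_in Sg b -> pre b (size w0) = w0 ->
  (forall N, exists n, N <= n /\ actr w0 (pre b n)) -> False.
Proof.
move=> Hb Hw0b Hinf.
have F1 : forall n n' m', size w0 <= n < n' -> actr w0 (pre b n') ->
    t (pre b n') = Some (Lp m') ->
    t (pre b n) <> Some Lsim /\ forall j', j' < m' -> t (pre b n) <> Some (Lp j').
  move=> n n' m' Hn [_ [_ [j [Hj _ Hc]]]] Hm'.
  rewrite Hj in Hm'; case: Hm' => ?; subst j.
  rewrite -(take_pre b (n:=n')); last by lia.
  apply: Hc; rewrite size_pre; lia.
have Hsz : forall n, actr w0 (pre b n) -> size w0 <= n.
  move=> n [_ [Hp _]]; have := pref_size Hp; by rewrite size_pre.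
set Q := fun m => exists n, actr w0 (pre b n) /\ t (pre b n) = Some (Lp m).
have [m0 [[n0 [A0 T0]] Mm0]] : exists m, Q m /\ forall m', Q m' -> m <= m'.
  apply: ex_min_nat; have [n [_ An]] := Hinf 0.
  have [_ [_ [j [Hj _ _]]]] := An; by exists j, n.
have Hl0 : losingb i k P m0.
  have [_ [_ [j [Hj Hl _]]]] := A0; rewrite Hj in T0; by case: T0 => <-.
have Hs0 := Hsz _ A0.
have Hinfm0 : inf_p t b m0.
  move=> N; have [n [Hn An]] := Hinf (maxn N n0.+1).
  have [_ [_ [m [Hm _ _]]]] := An.
  have Hmm0 : m <= m0.
    have [_ F] := F1 n0 n m ltac:(lia) An Hm.
    case: (leqP m m0) => // H; exfalso; exact: F m0 H T0.
  have Hm0m : m0 <= m by apply: Mm0; exists n.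
  exists n; split; first lia.
  have -> : m0 = m by lia.
  exact: Hm.
have Hnosmall : forall j', j' < m0 -> ~ inf_p t b j'.
  move=> j' Hj' Hinfj.
  have [n [Hn Tn]] := Hinfj (size w0).
  have [n' [Hn' An']] := Hinf n.+1.
  have [_ [_ [m' [Hm' _ _]]]] := An'.
  have [_ F] := F1 n n' m' ltac:(lia) An' Hm'.
  have Hm0m' : m0 <= m' by apply: Mm0; exists n'.
  case: (leqP m' j') => H.
  + lia.
  + exact: F j' H Tn.
have Hkept : forall n, ~~ switched t (pre b n).
  move=> n; rewrite /switched /nsim size_pre.
  rewrite (@eq_in_count _ _ pred0); first by rewrite count_pred0.
  move=> n'; rewrite mem_iota => /andP[_ Hn'] /=.
  rewrite take_pre; last lia.
  suff : t (pre b n') <> Some Lsim by case: (t (pre b n')) => [[]|] //.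
  case: (ltnP n' (size w0)) => H.
  + rewrite -(take_pre b (n:=size w0)); last lia.
    rewrite Hw0b; exact: Hw0.
  + have [n'' [Hn'' An'']] := Hinf n'.+1.
    have [_ [_ [m'' [Hm'' _ _]]]] := An''.
    exact: (F1 n' n'' m'' ltac:(lia) An'' Hm'').1.
have Hmp : min_prio k t b m0 by left.
have Hek : ev_kept t b by exists 0 => n _; exact: Hkept.
have := Hwin Hb; rewrite /won_by.
move: Hl0; rewrite /losingb; case: P => /andP[_ Hodd].
- move=> [jj [Hjj [[_ Hev]|[[N HN] _]]]].
  + have E := min_prio_uniq Hjj Hinfm0 Hnosmall; subst jj; by rewrite Hodd in Hev.
  + by have := HN N (leqnn N); rewrite (negbTE (Hkept N)).
- move=> H; apply: H; exists m0; split => //; by left.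
Qed.

Lemma Rr_wf : well_founded (Rr w0).
Proof.
move=> u; apply: NNPP => Nu.
have step : forall x, ~ Acc (Rr w0) x -> exists y, Rr w0 y x /\ ~ Acc (Rr w0) y.
  move=> x Nx; apply: NNPP => C; apply: Nx; constructor => y Ry.
  apply: NNPP => Ny; apply: C; by exists y.
pose nxt x := epsilon (inhabits [::]) (fun y => Rr w0 y x /\ ~ Acc (Rr w0) y).
pose c n := iter n nxt u.
have Hc : forall n, ~ Acc (Rr w0) (c n) /\ (Rr w0 (c n.+1) (c n)).
  elim=> [|n [IH1 IH2]].
  - have := epsilon_spec (inhabits [::]) _ (step _ Nu); rewrite /c /= => -[A B]; by split.
  - have N1 : ~ Acc (Rr w0) (c n.+1).
      have := epsilon_spec (inhabits [::]) _ (step _ IH1); by case.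
    split => //.
    have := epsilon_spec (inhabits [::]) _ (step _ N1); by case.
have HR n := (Hc n).2.
have Hsize : forall n, n <= size (c n).
  elim=> [|n IH] //; have [_ [_ [Hp [Hne _]]]] := HR n.
  have := pref_neq_lt Hp Hne; lia.
have Hpc : forall n m, n <= m -> pref (c n) (c m).
  move=> n; elim=> [|m IH] Hnm.
  - have -> : n = 0 by lia. exact: pref_refl.
  - case: (leqP n m) => H.
    + have [_ [_ [Hp _]]] := HR m; exact: pref_trans (IH H) Hp.
    + have -> : n = m.+1 by lia. exact: pref_refl.
pose b m := nth 0 (c m.+1) m.
have Hpre : forall m M, m <= M -> pre b m = take m (c M).
  move=> m M H; rewrite /pre -(map_nth_iota0 0 (s := c M)); last exact: leq_trans H (Hsize M).
  apply/eq_in_map => x; rewrite mem_iota => /andP[_ Hx].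
  rewrite /b; have [v Ev] := Hpc x.+1 M ltac:(lia).
  rewrite Ev nth_cat; have := Hsize x.+1; case: ltnP => //; lia.
have Hb : branch_in Sg b.
  move=> m; rewrite (Hpre m m (leqnn m)).
  have [Sm _] := HR m; apply: (H1 (w := drop m (c m))); by rewrite cat_take_drop.
have Hinf : forall N, exists n, N <= n /\ actr w0 (pre b n) /\ pref w0 (pre b n).
  move=> N; have [_ [_ [_ [_ [a [Aa [Pa1 Pa2]]]]]]] := HR N.
  exists (size a); split; first exact: leq_trans (Hsize N) (pref_size Pa1).
  have Ea : pre b (size a) = a.
    rewrite (Hpre _ (size a + N.+1)); last lia.
    apply/esym/pref_take; apply: pref_trans Pa2 _; apply: Hpc; lia.
  rewrite Ea; split => //; by case: Aa => _ [].
apply: (@game_contra b Hb).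
- have [n [_ [_ Hp]]] := Hinf 0.
  rewrite {2}(pref_take Hp) take_pre //; have := pref_size Hp; by rewrite size_pre.
- move=> N; have [n [Hn [A _]]] := Hinf N; by exists n.
Qed.
End WF.


Section Sub.
Variables (i k : nat) (P : player) (t : tree) (Sg : node -> Prop) (w : node).
Hypothesis Hw0 : forall n, n < size w -> t (take n w) <> Some Lsim.

Lemma Rg_sub_Rr v' v : Rg i k P (subtree t w) (subset_at Sg w) v' v ->
  Rr i k P t Sg w (w ++ v') (w ++ v).
Proof.
move=> [Sv [Sv' [Pvv' [Nvv' [a [Aa [Pva Pav']]]]]]].
split => //; split => //; split; first by apply/pref_cat2.
split; first by move/catI.
exists (w ++ a); split; last by split; apply/pref_cat2.
case: Aa => Sa [j [Tj Lj Hc]].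
split => //; split; first by exists a.
exists j; split => // n; rewrite size_cat => Hn.
rewrite take_cat; case: ltnP => H; first lia.
apply: Hc; lia.
Qed.

Lemma acc_transport x : Acc (Rr i k P t Sg w) x -> forall v, x = w ++ v ->
  Acc (Rg i k P (subtree t w) (subset_at Sg w)) v.
Proof.
elim=> {}x _ IH v Ex; constructor => v' Rv'.
apply: (IH (w ++ v')) => //; rewrite Ex; exact: Rg_sub_Rr.
Qed.
End Sub.

Section Main.
Variables (i k : nat) (P : player) (t : tree) (Sg : node -> Prop).
Hypothesis Ht : is_tree i k t.
Hypothesis Hwin : winning k t P Sg.

Lemma H1o : forall u w, Sg (u ++ w) -> Sg u.
Proof. by case: Hwin => -[]. Qed.

Lemma H2o : forall u j, Sg u -> t u = Some (Lp j) ->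
  Sg (rcons u 0) /\ forall n, Sg (rcons u n) -> n = 0.
Proof.
move=> u j Su Tu; case: Hwin => -[_ Hdom _ _ Hnc] _; case: Ht => _ _ Har _.
have Nc : ~ controlled t P u by rewrite /controlled Tu => -[[_ E]|[_ E]].
split.
- apply: Hnc => //; apply/(Har _ _ Tu); by [].
- move=> n /Hdom /(Har _ _ Tu) /=; lia.
Qed.

Lemma Hbr : forall b, branch_in Sg b -> won_by k t P b.
Proof. by case: Hwin. Qed.

Section W.
Variable w : node.
Hypothesis Hw0 : forall n, n < size w -> t (take n w) <> Some Lsim.

Lemma wf_sub : well_founded (Rg i k P (subtree t w) (subset_at Sg w)).
Proof.
move=> v.
have HA : Acc (Rr i k P t Sg w) (w ++ v) := @Rr_wf i k P t Sg H1o Hbr w Hw0 (w ++ v).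
exact: (@acc_transport i k P t Sg w (w ++ v) HA v erefl).
Qed.

Lemma H1s : forall u v, subset_at Sg w (u ++ v) -> subset_at Sg w u.
Proof. move=> u v; rewrite /subset_at catA; exact: H1o. Qed.

Lemma H2s : forall u j, subset_at Sg w u -> subtree t w u = Some (Lp j) ->
  subset_at Sg w (rcons u 0) /\ forall n, subset_at Sg w (rcons u n) -> n = 0.
Proof.
move=> u j; rewrite /subset_at /subtree => Su Tu.
have [A B] := H2o Su Tu; split; first by rewrite -rcons_cat.
move=> n Hn; apply: B; by rewrite rcons_cat.
Qed.
End W.

Lemma wf_orig : well_founded (Rg i k P t Sg).
Proof.
have H0 : forall n, n < size ([::] : node) -> t (take n [::]) <> Some Lsim by [].
exact: (@wf_sub [::] H0).
Qed.

Definition fo := s_fun i k P t Sg.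
Lemma fo_eqs : s_eqs i k P t Sg fo.
Proof. exact: s_fun_eqs H2o wf_orig. Qed.

Section Corr.
Variables (w : node) (jw : nat).
Hypothesis Aw : active i k t P Sg w.
Hypothesis Tw : t w = Some (Lp jw).
Let ts := subtree t w.
Let Ss := subset_at Sg w.
Definition gs := s_fun i k P ts Ss.

Lemma Hw0a : forall n, n < size w -> t (take n w) <> Some Lsim.
Proof.
case: Aw => _ [j [Tj _ Hc]] n Hn; exact: (Hc n Hn).1.
Qed.

Lemma gs_eqs : s_eqs i k P ts Ss gs.
Proof. exact: s_fun_eqs (@H2s w) (wf_sub Hw0a). Qed.

Lemma C1 v j' : active i k ts P Ss v -> t (w ++ v) = Some (Lp j') -> j' <= jw ->
  active i k t P Sg (w ++ v).
Proof.
move=> [Sv [j [Tj Lj Hc]]] Tv Hj'.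
rewrite /ts /subtree Tv in Tj; case: Tj => ?; subst j.
split => //; exists j'; split => // n; rewrite size_cat => Hn.
rewrite take_cat; case: ltnP => H.
- case: Aw => _ [j0 [Tj0 _ Hc0]]; rewrite Tw in Tj0; case: Tj0 => ?; subst j0.
  have [A B] := Hc0 n H; split => // j1 Hj1; apply: B; lia.
- exact: Hc (n - size w) ltac:(lia).
Qed.

Lemma C2 v : active i k t P Sg (w ++ v) -> active i k ts P Ss v.
Proof.
move=> [Sv [j [Tj Lj Hc]]]; split => //; exists j; split => // n Hn.
have := Hc (size w + n); rewrite size_cat take_cat.
have -> : (size w + n < size w) = false by lia.
rewrite addKn => H; apply: H; lia.
Qed.

Lemma corr x : Acc (Rg i k P t Sg) x -> forall v j', x = w ++ v ->
  active i k ts P Ss v -> t x = Some (Lp j') -> j' <= jw ->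
  lexeq (losidx i k P k) (gs v) (fo x).
Proof.
elim=> {}x _ IH v j' Ex Av Tx Hj'; subst x.
have Ax := C1 Av Tx Hj'.
have Sv : Ss v by case: Av.
have Sx : Sg (w ++ v) by case: Ax.
have Hl' : losingb i k P j'.
  case: Ax => _ [j [Tj Lj _]]; rewrite Tx in Tj; by case: Tj => ->.
have Eg := (gs_eqs Sv).1 j' Av Tx.
have Ef := (fo_eqs Sx).1 j' Ax Tx.
apply: lexeq_trans Eg _; apply: lexeq_trans _ (lexeq_sym Ef).
apply: (lexeq_bump2 (l1 := losidx i k P j')).
  by move=> m; rewrite !mem_losidx => /andP[-> _] ->.
have [Sv0 _] := H2s Sv Tx.
have [Sx0 _] := H2o Sx Tx.
have Pg := part1 (@H1s w) (@H2s w) (wf_sub Hw0a) gs_eqs Sv0 Hl'.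
have Pf := part1 H1o H2o wf_orig fo_eqs Sx0 Hl'.
have Rgy : forall v', pref (rcons v 0) v' -> Sg (w ++ v') -> Rg i k P t Sg (w ++ v') (w ++ v).
  move=> v' Pv' Sv'; split => //; split => //.
  have Pvv' : pref (w ++ v) (w ++ v') by apply/pref_cat2; exact: pref_trans (pref_rcons v 0) Pv'.
  split => //; split.
    move=> E; have := pref_size Pv'; rewrite -(catI E) size_rcons; lia.
  exists (w ++ v); split => //; split => //; exact: pref_refl.
apply: (lub_corr Pg Pf).
- move=> y1 [v' [[Av' Pv' [j'' [Tv' Hj'']]] ->]].
  have Sv' : Sg (w ++ v') by case: Av'.
  exists (fo (w ++ v')); split.
  + exists (w ++ v'); split => //; split.
    * apply: C1 Av' Tv' _; lia.
    * by rewrite rcons_cat; apply/pref_cat2.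
    * by exists j''.
  + apply: lexeq_sub (@losidx_subk _ _ _ _) _.
    apply: (IH _ (Rgy v' Pv' Sv') v' j'') => //; lia.
- move=> y2 [y [[Ay Py [j'' [Ty Hj'']]] ->]].
  rewrite rcons_cat in Py; case: Py => d Ed.
  set v' := rcons v 0 ++ d.
  have Ey : y = w ++ v' by rewrite Ed /v' catA.
  have Pv' : pref (rcons v 0) v' by exists d.
  have Sv' : Sg (w ++ v') by rewrite -Ey; case: Ay.
  exists (gs v'); split.
  + exists v'; split => //; split => //.
    * apply: C2; by rewrite -Ey.
    * by exists j''; rewrite /ts /subtree -Ey.
  + rewrite Ey; apply: lexeq_sub (@losidx_subk _ _ _ _) _.
    apply: (IH _ (Rgy v' Pv' Sv') v' j'') => //; [apply: C2; by rewrite -Ey|by rewrite -Ey|lia].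
Qed.
End Corr.
End Main.


Unset Implicit Arguments.

Theorem mainTheorem10 (i k : nat) (hik : i < k) (P : player) (t : tree)
    (Sg : node -> Prop) (u : node) (j : nat) :
  is_tree i k t -> well_formed t -> winning k t P Sg -> Sg u ->
  losingb i k P j ->
  is_lub (losidx i k P j)
    (fun x => exists w, act_at i k t P Sg u j w /\ x = s_fun i k P t Sg w)
    (s_fun i k P t Sg u) /\
  is_lub (losidx i k P j)
    (fun x => exists w, act_at i k t P Sg u j w /\
                        x = s_fun i k P (subtree t w) (subset_at Sg w) [::])
    (s_fun i k P t Sg u).
Proof.
move=> Ht _ Hwin Su Hj.
have Hf := fo_eqs Ht Hwin.
have P1 := part1 (H1o Hwin) (H2o Ht Hwin) (wf_orig i Hwin) Hf Su Hj.
split; first exact: P1.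
have key : forall w, act_at i k t P Sg u j w ->
    lexeq (losidx i k P j) (s_fun i k P (subtree t w) (subset_at Sg w) [::]) (s_fun i k P t Sg w).
  move=> w [Aw Pw [jw [Tw Hjw]]].
  have Av : active i k (subtree t w) P (subset_at Sg w) [::] by apply: C2; rewrite cats0.
  have := @corr i k P t Sg Ht Hwin w jw Aw Tw w (wf_orig i Hwin w) [::] jw (esym (cats0 w)) Av Tw (leqnn jw).
  apply: lexeq_sub => m; rewrite !mem_losidx => /andP[Hm _]; rewrite Hm /=.
  by case/andP: (losing_le Hm).
apply: (lub_corr2 P1).
- move=> y1 [w [Aw ->]]; exists (s_fun i k P t Sg w); split; first by exists w.
  exact: key.
- move=> y2 [w [Aw ->]]; exists (s_fun i k P (subtree t w) (subset_at Sg w) [::]); split; first by exists w.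
  exact: key.
Qed.
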